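(* For positive integers $c,r$ let $X_{c,r}$ denote the graph with vertex set $\{x_{i,j}:1\le i\le c,\ 1\le j\le r\}$ (where $i$ is the column and $j$ the row, row $1$ being the bottom row) in which $x_{i,j}x_{i',j'}$ is an edge if and only if $i'=i+1$ and $j\ge j'$. Let $n\ge 1$ and let $M,N$ be positive integers. Then every embedding (as an induced subgraph) of $X_{n,4n-1}$ into $X_{M,N}$ contains a copy of $X_{n,n}$ (an induced subgraph of the image isomorphic to $X_{n,n}$) that occupies exactly $n$ contiguous columns of $X_{M,N}$, with each column of this $X_{n,n}$ embedded into a single column of $X_{M,N}$.
   Context: An embedding of a graph $H$ into a graph $G$ is an injective map $\phi:V(H)\to V(G)$ with $uv\in E(H)$ if and only if $\phi(u)\phi(v)\in E(G)$. The graphs $X_{c,r}$ (called $X$-grids) are as defined in the claim; the column of a vertex $x_{i,j}$ is $i$. *)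

(* Defs.v *)
From mathcomp Require Import all_boot.
Set Implicit Arguments. Unset Strict Implicit. Unset Printing Implicit Defensive.

(* Vertex x_{i,j} of X_{c,r} is the pair (i, j) : 'I_c * 'I_r, 0-based:
   column i (0 = leftmost), row j (0 = bottom row). *)
Definition Xvert (c r : nat) := ('I_c * 'I_r)%type.

Definition Xdir (c r : nat) (u v : Xvert c r) : bool :=
  (u.1.+1 == v.1 :> nat) && (v.2 <= u.2).

Definition Xadj (c r : nat) : rel (Xvert c r) :=
  fun u v => Xdir u v || Xdir v u.

Definition col (c r : nat) (u : Xvert c r) : nat := u.1.

Definition is_embedding (T U : Type) (eT : rel T) (eU : rel U) (phi : T -> U) : Prop :=
  injective phi /\ forall u v, eT u v = eU (phi u) (phi v).

(* Main.v *)
Require Import Defs.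
From mathcomp Require Import all_boot zify.
From Stdlib Require Import Classical.
Set Implicit Arguments. Unset Strict Implicit. Unset Printing Implicit Defensive.

Definition XA (u v : nat * nat) : bool :=
  ((u.1.+1 == v.1) && (v.2 <= u.2)) || ((v.1.+1 == u.1) && (u.2 <= v.2)).

Lemma XA_r u v : u.1.+1 = v.1 -> XA u v = (v.2 <= u.2).
Proof.
move=> e; rewrite /XA e eqxx /=.
have -> : (v.1.+1 == u.1) = false by apply/eqP; lia.
by rewrite andFb orbF.
Qed.
Lemma XA_l u v : v.1.+1 = u.1 -> XA u v = (u.2 <= v.2).
Proof.
move=> e; rewrite /XA e eqxx /=.
have -> : (u.1.+1 == v.1) = false by apply/eqP; lia.
by [].
Qed.
Lemma XA_far u v : u.1.+1 <> v.1 -> v.1.+1 <> u.1 -> XA u v = false.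
Proof.
move=> e1 e2; rewrite /XA.
have -> : (u.1.+1 == v.1) = false by apply/eqP.
by have -> : (v.1.+1 == u.1) = false by apply/eqP.
Qed.
Lemma XA_col u v : XA u v -> u.1.+1 = v.1 \/ v.1.+1 = u.1.
Proof. by rewrite /XA => /orP [/andP [/eqP -> _]|/andP [/eqP -> _]]; [left|right]. Qed.

Ltac simplXA := repeat match goal with
 | H : context [XA ?u ?v] |- _ =>
   first [ rewrite (@XA_r u v) in H; [|lia]
         | rewrite (@XA_l u v) in H; [|lia]
         | rewrite (@XA_far u v) in H; [|lia|lia] ]
 end.

Ltac simplXAg := repeat match goal with
 | |- context [XA ?u ?v] =>
   first [ rewrite (@XA_r u v); [|lia]
         | rewrite (@XA_l u v); [|lia]
         | rewrite (@XA_far u v); [|lia|lia] ]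
 end.

Definition pairH (R : nat) (a b : nat -> nat * nat) :=
  forall j j', j < R -> j' < R -> XA (a j) (b j') = (j' <= j).

Lemma colA R a b (H : pairH R a b) j : 0 < R -> j < R ->
  (a j).1.+1 = (b 0).1 \/ (b 0).1.+1 = (a j).1.
Proof. move=> h0 hj; apply: XA_col; by rewrite H. Qed.
Lemma colB R a b (H : pairH R a b) j : 0 < R -> j < R ->
  (a R.-1).1.+1 = (b j).1 \/ (b j).1.+1 = (a R.-1).1.
Proof. move=> h0 hj; apply: XA_col; rewrite H //; lia. Qed.
Lemma colAB R a b (H : pairH R a b) j : j < R ->
  (a j).1.+1 = (b j).1 \/ (b j).1.+1 = (a j).1.
Proof. move=> hj; apply: XA_col; by rewrite H. Qed.

Ltac factg H x y := move: (H x y ltac:(lia) ltac:(lia)).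
Ltac fact H x y := let f := fresh "f" in have f := H x y ltac:(lia) ltac:(lia);
  first [ rewrite (_ : (y <= x) = true) in f; [|lia]
        | rewrite (_ : (y <= x) = false) in f; [|lia] ].

Lemma O4U R a b (H : pairH R a b) m k1 k2 : m < k1 -> k1 < k2 -> k2 < R ->
  (a k1).1 = (a R.-1).1 -> (b k1).1 = (b 0).1 -> (a k2).1 = (a R.-1).1 -> (b k2).1 = (b 0).1 ->
  (b m).1 = (b 0).1 -> (a m).1 <> (a R.-1).1 -> False.
Proof.
move=> h1 h2 h3 e1 e2 e3 e4 e5 e6.
have ts := colB H (ltac:(lia) : 0 < R) (ltac:(lia) : 0 < R).
have cm := colA H (ltac:(lia) : 0 < R) (ltac:(lia) : m < R).
fact H m k2; fact H m m; fact H k1 m; fact H k1 k2.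
case: ts => ts; case: cm => cm; simplXA; lia.
Qed.


Lemma O4W R a b (H : pairH R a b) w k1 k2 : k1 < k2 -> k2 < w -> w < R ->
  (a k1).1 = (a R.-1).1 -> (b k1).1 = (b 0).1 -> (a k2).1 = (a R.-1).1 -> (b k2).1 = (b 0).1 ->
  (a w).1 = (a R.-1).1 -> (b w).1 <> (b 0).1 -> False.
Proof.
move=> h1 h2 h3 e1 e2 e3 e4 e5 e6.
have ts := colB H (ltac:(lia) : 0 < R) (ltac:(lia) : 0 < R).
have cw := colB H (ltac:(lia) : 0 < R) (ltac:(lia) : w < R).
factg H k1 w; factg H w w; factg H w k2; factg H k1 k2; factg H k2 w; factg H w k1.
case: ts => ts; case: cw => cw; simplXAg; lia.
Qed.

Lemma O2 R a b (H : pairH R a b) k m : k < m -> m < R ->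
  (a k).1 = (a R.-1).1 -> (b k).1 = (b 0).1 ->
  (b m).1 = (b 0).1 -> (a m).1 <> (a R.-1).1 -> False.
Proof.
move=> h1 h2 e1 e2 e5 e6.
have hm : m != R.-1 by apply/eqP => e; rewrite e in e6.
have ts := colB H (ltac:(lia) : 0 < R) (ltac:(lia) : 0 < R).
have cm := colA H (ltac:(lia) : 0 < R) (ltac:(lia) : m < R).
have cT := colB H (ltac:(lia) : 0 < R) (ltac:(lia) : R.-1 < R).
factg H k k; factg H k m; factg H m m; factg H m k; factg H k R.-1; factg H m R.-1;
factg H R.-1 m; factg H R.-1 R.-1; factg H R.-1 k.
case: ts => ts; case: cm => cm; case: cT => cT; simplXAg; lia.
Qed.

Lemma O3 R a b (H : pairH R a b) k w : w < k -> k < R ->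
  (a k).1 = (a R.-1).1 -> (b k).1 = (b 0).1 ->
  (a w).1 = (a R.-1).1 -> (b w).1 <> (b 0).1 -> False.
Proof.
move=> h1 h2 e1 e2 e5 e6.
have hw : 0 < w.
  case: (posnP w) => // w0; rewrite w0 in e6; by [].
have ts := colB H (ltac:(lia) : 0 < R) (ltac:(lia) : 0 < R).
have cw := colB H (ltac:(lia) : 0 < R) (ltac:(lia) : w < R).
have c0 := colA H (ltac:(lia) : 0 < R) (ltac:(lia) : 0 < R).
factg H k k; factg H k w; factg H w w; factg H w k; factg H 0 k; factg H 0 w;
factg H k 0; factg H w 0; factg H 0 0.
case: ts => ts; case: cw => cw; case: c0 => c0; simplXAg; lia.
Qed.

Lemma count_le1 (T : eqType) (P : pred T) s : uniq s ->
  (forall x y, x \in s -> y \in s -> P x -> P y -> x = y) -> count P s <= 1.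
Proof.
elim: s => //= x s IH /andP [xs us] H.
case Px: (P x) => /=.
  have -> : count P s = 0.
    apply/eqP; rewrite -leqn0 leqNgt -has_count; apply/hasP => [[y ys Py]].
    have := H x y; rewrite inE eqxx inE ys orbT => /(_ isT isT Px Py) e.
    by move: xs; rewrite e ys.
  by [].
apply: IH => // y z ys zs; apply: H; by rewrite inE ?ys ?zs orbT.
Qed.

Lemma count2 (T : eqType) (P : pred T) s : uniq s -> 1 < count P s ->
  exists x y, [/\ x \in s, y \in s, x != y, P x & P y].
Proof.
move=> us h; apply/not_all_not_ex => H0.
have : count P s <= 1.
  apply: count_le1 => // x y xs ys Px Py.
  apply/eqP/negPn/negP => ne; apply: (H0 x); exists y; by split.
by rewrite leqNgt h.
Qed.

Lemma count_sub_in (T : eqType) (P Q : pred T) s :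
  (forall x, x \in s -> P x -> Q x) -> count P s <= count Q s.
Proof.
elim: s => //= x s IH H; apply: leq_add.
  by case Px: (P x) => //; rewrite (H x) // inE eqxx.
by apply: IH => y ys; apply: H; rewrite inE ys orbT.
Qed.

Lemma count_or_in (T : eqType) (P Q1 Q2 : pred T) s :
  (forall x, x \in s -> P x -> Q1 x || Q2 x) -> count P s <= count Q1 s + count Q2 s.
Proof.
move=> H; rewrite -count_predUI; apply: leq_trans (leq_addr _ _).
exact: count_sub_in.
Qed.

Definition Nr R (a b : nat -> nat * nat) j :=
  ((a j).1 == (a R.-1).1) && ((b j).1 == (b 0).1).

Lemma pairE R a b (H : pairH R a b) : 0 < R ->
  (forall j1 j2, j1 < R -> j2 < R -> Nr R a b j1 -> Nr R a b j2 -> j1 = j2) \/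
  (forall j, j < R -> Nr R a b j).
Proof.
move=> R0.
case: (classic (exists j1 j2, [/\ j1 < R, j2 < R, Nr R a b j1, Nr R a b j2 & j1 < j2]))
  => [[k1 [k2 [h1 h2 n1 n2 lt12]]]|Hn]; last first.
  left => j1 j2 h1 h2 n1 n2.
  case: (ltngtP j1 j2) => // l; exfalso; apply: Hn.
    by exists j1, j2.
  by exists j2, j1.
right => j hj; apply/negPn/negP => nj.
move: n1 n2 nj; rewrite /Nr => /andP [/eqP e1 /eqP e2] /andP [/eqP e3 /eqP e4].
have ts := colB H R0 R0.
have ca := colA H R0 hj.
have cb := colB H R0 hj.
have cab := colAB H hj.
case: (eqVneq (a j).1 (a R.-1).1) => ea /=.
  move=> eb; have {}eb : (b j).1 <> (b 0).1 by move=> e; move: eb; rewrite e eqxx.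
  case: (ltngtP j k2) => l.
  - exact: (O3 H l h2 e3 e4 ea eb).
  - exact: (O4W H lt12 l hj e1 e2 e3 e4 ea eb).
  - by move: eb; rewrite l e4.
move=> _.
have eb : (b j).1 = (b 0).1.
  have ea' : (a j).1 <> (a R.-1).1 by apply/eqP.
  lia.
have ea' : (a j).1 <> (a R.-1).1 by apply/eqP.
case: (ltngtP j k1) => l.
- exact: (O4U H l lt12 h2 e1 e2 e3 e4 eb ea').
- exact: (O2 H l hj e1 e2 eb ea').
- by move: ea'; rewrite l e1.
Qed.

Definition plusP (a b : nat -> nat * nat) j := (b j).1 == (a j).1 + 1.

Lemma pair_count R a b (H : pairH R a b) : 0 < R ->
  exists bb, count (fun j => plusP a b j != bb) (iota 0 R) <= 1.
Proof.
move=> R0.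
set eps := ((b 0).1 == (a R.-1).1 + 1).
have ts := colB H R0 R0.
have hN : forall j, j < R -> Nr R a b j -> plusP a b j = eps.
  move=> j hj; rewrite /Nr /plusP /eps => /andP [/eqP e1 /eqP e2].
  by rewrite e1 e2.
have hNn : forall j, j < R -> ~~ Nr R a b j -> plusP a b j = ~~ eps.
  move=> j hj; rewrite /Nr /plusP /eps => hn.
  have ca := colA H R0 hj; have cb := colB H R0 hj; have cab := colAB H hj.
  lia.
case: (pairE H R0) => [hl|hr].
  exists (~~ eps); apply: leq_trans (_ : count (Nr R a b) (iota 0 R) <= 1).
    apply: count_sub_in => j; rewrite mem_iota add0n => /andP [_ hj].
    by apply: contraR => /(hNn j hj) ->.
  apply: count_le1; first exact: iota_uniq.
  move=> x y; rewrite !mem_iota !add0n => /andP [_ hx] /andP [_ hy].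
  exact: hl.
exists eps; apply: leq_trans (_ : count pred0 (iota 0 R) <= 1); last by rewrite count_pred0.
apply: count_sub_in => j; rewrite mem_iota add0n => /andP [_ hj].
by rewrite hN ?eqxx ?hr.
Qed.

Lemma NB R a b c (Hab : pairH R a b) (Hbc : pairH R b c) j j' :
  j < j' -> j' < R -> (b j).1 = (b j').1 -> (a j).1 = (c j').1 -> False.
Proof.
move=> h1 h2 e1 e2.
have c1 := colAB Hab (ltac:(lia) : j < R).
have c2 := colAB Hbc h2.
factg Hab j j; factg Hab j j'; factg Hbc j' j'; factg Hbc j j'.
case: c1 => c1; case: c2 => c2; simplXAg; lia.
Qed.

Definition dlt R (F : nat -> nat -> nat * nat) i :=
  1 < count (plusP (F i) (F i.+1)) (iota 0 R).

Lemma L1 R F i : 0 < R -> pairH R (F i) (F i.+1) ->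
  count (fun j => plusP (F i) (F i.+1) j != dlt R F i) (iota 0 R) <= 1.
Proof.
move=> R0 H; have [bb hb] := pair_count H R0.
have e : count (fun j => plusP (F i) (F i.+1) j != false) (iota 0 R)
         = count (plusP (F i) (F i.+1)) (iota 0 R).
  by apply: eq_count => j; case: plusP.
rewrite /dlt; case: (ltnP 1 (count (plusP (F i) (F i.+1)) (iota 0 R))) => h.
  case: bb hb => // hb; move: h hb; rewrite e; lia.
by rewrite e.
Qed.

Lemma count_has (T1 T2 : eqType) (Q : T1 -> pred T2) (I : seq T1) s :
  (forall i, i \in I -> count (Q i) s <= 1) ->
  count (fun j => has (fun i => Q i j) I) s <= size I.
Proof.
elim: I => [|i I IH] H /=.
  by rewrite count_pred0.
apply: leq_trans (_ : count (Q i) s + count (fun j => has (fun i => Q i j) I) s <= _).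
  by apply: count_or_in => j _.
rewrite -addn1 addnC; apply: leq_add.
  by apply: IH => k kI; apply: H; rewrite inE kI orbT.
by apply: H; rewrite inE eqxx.
Qed.


Lemma zig_col R (F : nat -> nat -> nat * nat) i k :
  pairH R (F i) (F i.+1) -> pairH R (F i.+1) (F i.+2) -> k < R ->
  dlt R F i != dlt R F i.+1 ->
  plusP (F i) (F i.+1) k == dlt R F i -> plusP (F i.+1) (F i.+2) k == dlt R F i.+1 ->
  (F i k).1 = (F i.+2 k).1.
Proof.
move=> H1 H2 hk; rewrite /plusP.
have c1 := colAB H1 hk; have c2 := colAB H2 hk.
case: (dlt R F i); case: (dlt R F i.+1) => //= _; lia.
Qed.

Lemma L2 R F i : 5 <= R -> pairH R (F i) (F i.+1) -> pairH R (F i.+1) (F i.+2) ->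
  dlt R F i = dlt R F i.+1.
Proof.
move=> R5 H1 H2.
case: (eqVneq (dlt R F i) (dlt R F i.+1)) => // ne; exfalso.
set G := fun j => (plusP (F i) (F i.+1) j == dlt R F i) &&
                  (plusP (F i.+1) (F i.+2) j == dlt R F i.+1).
have hc1 := L1 (ltac:(lia) : 0 < R) H1.
have hc2 := L1 (ltac:(lia) : 0 < R) H2.
have cC : count (predC G) (iota 0 R) <= 2.
  apply: leq_trans (count_or_in (Q1 := fun j => plusP (F i) (F i.+1) j != dlt R F i)
                                (Q2 := fun j => plusP (F i.+1) (F i.+2) j != dlt R F i.+1) _) _.
    by move=> j _; rewrite /G /= negb_and.
  exact: (leq_add hc1 hc2).
have cG : R - 2 <= count G (iota 0 R).
  have := count_predC G (iota 0 R); rewrite size_iota; lia.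
set t := (F i R.-1).1.
have cG2 : count G (iota 0 R) <=
   count (fun j => G j && ((F i.+1 j).1.+1 == t)) (iota 0 R) +
   count (fun j => G j && ((F i.+1 j).1 == t.+1)) (iota 0 R).
  apply: count_or_in => j; rewrite mem_iota add0n => /andP [_ hj] Gj.
  have := colB H1 (ltac:(lia) : 0 < R) hj; rewrite Gj /= -/t; lia.
have key : forall C : pred nat, (forall j j', C j -> C j' -> (F i.+1 j).1 = (F i.+1 j').1) ->
    1 < count (fun j => G j && C j) (iota 0 R) -> False.
  move=> C hC hcnt.
  have [j [j' [jin j'in ne' /andP [Gj Cj] /andP [Gj' Cj']]]] := count2 (iota_uniq 0 R) hcnt.
  move: jin j'in; rewrite !mem_iota !add0n => /andP [_ hj] /andP [_ hj'].
  move: Gj Gj' => /andP [a1 a2] /andP [b1 b2].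
  have z1 := zig_col H1 H2 hj ne a1 a2.
  have z2 := zig_col H1 H2 hj' ne b1 b2.
  have e := hC j j' Cj Cj'.
  have c1 := colAB H1 hj; have c2 := colAB H1 hj'.
  move: a1 b1; rewrite /plusP => a1 b1.
  case: (ltngtP j j') => l.
  - apply: (NB H1 H2 l hj' e); lia.
  - apply: (NB H1 H2 l hj (esym e)); lia.
  - by move: ne'; rewrite l eqxx.
case: (ltnP 1 (count (fun j => G j && ((F i.+1 j).1.+1 == t)) (iota 0 R))) => h1.
  by apply: (key _ _ h1) => j j' /eqP e1 /eqP e2; lia.
case: (ltnP 1 (count (fun j => G j && ((F i.+1 j).1 == t.+1)) (iota 0 R))) => h2.
  by apply: (key _ _ h2) => j j' /eqP e1 /eqP e2; lia.
lia.
Qed.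

Definition allpair n R (F : nat -> nat -> nat * nat) :=
  forall i, i.+1 < n -> pairH R (F i) (F i.+1).

Lemma L3 n R F : 5 <= R -> allpair n R F -> forall i, i.+1 < n -> dlt R F i = dlt R F 0.
Proof.
move=> R5 H; elim => // i IH hi.
rewrite -IH; last lia.
symmetry; apply: L2 => //; apply: H; lia.
Qed.

Definition good n R F j :=
  all (fun i => plusP (F i) (F i.+1) j == dlt R F 0) (iota 0 n.-1).

Lemma L4 n R F : 0 < n -> 5 <= R -> allpair n R F ->
  count (predC (good n R F)) (iota 0 R) <= n.-1.
Proof.
move=> n0 R5 H.
apply: leq_trans (_ : count (fun j => has (fun i => plusP (F i) (F i.+1) j != dlt R F 0)
                                    (iota 0 n.-1)) (iota 0 R) <= _).
  apply: count_sub_in => j _; rewrite /good /= -has_predC.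
  by apply: sub_has => i /=.
rewrite -{2}(size_iota 0 n.-1); apply: count_has => i; rewrite mem_iota add0n => /andP [_ hi].
rewrite -(L3 R5 H (ltac:(lia) : i.+1 < n)).
apply: L1; first lia.
apply: H; lia.
Qed.

Lemma L5 n R F : allpair n R F -> forall j, j < R -> good n R F j ->
  forall i, i < n -> if dlt R F 0 then (F i j).1 = (F 0 j).1 + i
                     else (F i j).1 + i = (F 0 j).1.
Proof.
move=> H j hj hg; elim => [|i IH] hi.
  by case: dlt; rewrite addn0.
have hp : plusP (F i) (F i.+1) j == dlt R F 0.
  by move/allP: hg; apply; rewrite mem_iota add0n; lia.
have c := colAB (H i hi) hj.
move: hp (IH (ltnW hi)); rewrite /plusP.
case: dlt => /= hp IH'; lia.
Qed.

Lemma core n R F : 1 < n -> 3 * n <= R -> 5 <= R -> allpair n R F ->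
  exists (Q : pred nat) (x : nat) (d : bool), n <= count Q (iota 0 R) /\
   forall j, j < R -> Q j -> forall i, i < n ->
     if d then (F i j).1 = x + i else (F i j).1 + i = x.
Proof.
move=> n1 R3 R5 H.
set v := (F 1 0).1.
have cg : R - n.-1 <= count (good n R F) (iota 0 R).
  have := L4 (ltac:(lia) : 0 < n) R5 H.
  have := count_predC (good n R F) (iota 0 R); rewrite size_iota; lia.
have H0 := H 0 n1.
have cs : count (good n R F) (iota 0 R) <=
  count (fun j => good n R F j && ((F 0 j).1.+1 == v)) (iota 0 R) +
  count (fun j => good n R F j && ((F 0 j).1 == v.+1)) (iota 0 R).
  apply: count_or_in => j; rewrite mem_iota add0n => /andP [_ hj] gj.
  have := colA H0 (ltac:(lia) : 0 < R) hj; rewrite gj /= -/v; lia.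
case: (leqP n (count (fun j => good n R F j && ((F 0 j).1.+1 == v)) (iota 0 R))) => h1.
  exists (fun j => good n R F j && ((F 0 j).1.+1 == v)), v.-1, (dlt R F 0); split => //.
  move=> j hj /andP [gj /eqP ej] i hi; have := L5 H hj gj hi.
  case: dlt; lia.
exists (fun j => good n R F j && ((F 0 j).1 == v.+1)), v.+1, (dlt R F 0); split; first lia.
move=> j hj /andP [gj /eqP ej] i hi; have := L5 H hj gj hi.
case: dlt; lia.
Qed.

Definition pos (M N : nat) (v : Xvert M N) : nat * nat := (v.1 : nat, v.2 : nat).

Lemma XadjE M N (u v : Xvert M N) : Xadj u v = XA (pos u) (pos v).
Proof. by []. Qed.

Theorem lemma8 (n M N : nat) (hn : 0 < n) (hM : 0 < M) (hN : 0 < N)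
  (phi : Xvert n (4 * n - 1) -> Xvert M N) :
  is_embedding (@Xadj n (4 * n - 1)) (@Xadj M N) phi ->
  exists psi : Xvert n n -> Xvert M N,
    [/\ is_embedding (@Xadj n n) (@Xadj M N) psi,
        (forall v, exists u, psi v = phi u),
        (forall i : 'I_n, exists k, forall j : 'I_n, col (psi (i, j)) = k) &
        exists a, [/\ a + n <= M,
                     (forall v, a <= col (psi v) < a + n) &
                     (forall k, a <= k < a + n -> exists v, col (psi v) = k)]].
Proof.
move=> [phi_inj phi_adj].
set R := 4 * n - 1.
have R0 : 0 < R by rewrite /R; lia.
pose i0 : 'I_n := Ordinal hn.
pose j0 : 'I_R := Ordinal R0.
case: (ltngtP n 1) => hn1; first lia; last first.
  exists (fun _ => phi (i0, j0)); split.
  - split.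
    + move=> [u1 u2] [v1 v2] _; congr pair; apply/ord_inj;
        have := ltn_ord u1; have := ltn_ord v1; have := ltn_ord u2; have := ltn_ord v2; lia.
    + move=> [u1 u2] [v1 v2]; rewrite /Xadj /Xdir /=.
      have := ltn_ord u1; have := ltn_ord v1; lia.
  - by move=> v; exists (i0, j0).
  - by move=> i; exists (col (phi (i0, j0))).
  - exists (col (phi (i0, j0))); split.
    + have := ltn_ord (phi (i0, j0)).1; rewrite /col; lia.
    + move=> v; lia.
    + move=> k hk; exists (i0, i0); lia.
pose F i j := pos (phi (insubd i0 i, insubd j0 j)).
have HF : allpair n R F.
  move=> i hi j j' hj hj'.
  rewrite /F -XadjE -phi_adj /Xadj /Xdir /= !insubdK ?inE //; try lia.
have [Q [x [d [cQ hQ]]]] := core (ltac:(lia) : 1 < n) (ltac:(rewrite /R; lia) : 3 * n <= R)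
  (ltac:(rewrite /R; lia) : 5 <= R) HF.
set s := [seq j <- iota 0 R | Q j].
have ss : n <= size s by rewrite size_filter.
have sorted_s : sorted ltn s := sorted_filter ltn_trans _ (iota_ltn_sorted 0 R).
have uniq_s : uniq s := filter_uniq _ (iota_uniq 0 R).
have mem_s : forall k, k < size s -> nth 0 s k < R /\ Q (nth 0 s k).
  move=> k hk; have := mem_nth 0 hk; rewrite mem_filter mem_iota add0n.
  by case/andP => -> /andP [_ ->].
pose sg (k : 'I_n) := nth 0 s k.
have sgR : forall k : 'I_n, sg k < R.
  by move=> k; case: (mem_s k (leq_trans (ltn_ord k) ss)).
have sgQ : forall k : 'I_n, Q (sg k).
  by move=> k; case: (mem_s k (leq_trans (ltn_ord k) ss)).
have mono : forall a b : 'I_n, (sg b <= sg a) = (b <= a).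
  move=> a b; have ha := leq_trans (ltn_ord a) ss; have hb := leq_trans (ltn_ord b) ss.
  case: (ltngtP a b) => l.
  - have := sorted_ltn_nth ltn_trans 0 sorted_s a b ha hb l; rewrite /sg; lia.
  - have := sorted_ltn_nth ltn_trans 0 sorted_s b a hb ha l; rewrite /sg; lia.
  - by rewrite /sg l leqnn.
have vR : forall j, j < R -> val (insubd j0 j) = j by move=> j hj; apply: insubdK.
have vn : forall i, i < n -> val (insubd i0 i) = i by move=> i hi; apply: insubdK.
pose psi (u : Xvert n n) : Xvert M N := phi (u.1, insubd j0 (sg u.2)).
have hpsiF : forall u, pos (psi u) = F u.1 (sg u.2) by move=> u; rewrite /F valKd.
have hcol : forall u : Xvert n n,
    if d then col (psi u) = x + u.1 else col (psi u) + u.1 = x.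
  move=> u; have := hQ (sg u.2) (sgR _) (sgQ _) u.1 (ltn_ord _).
  by rewrite -hpsiF.
have hMc : forall u, col (psi u) < M by move=> u; exact: ltn_ord.
pose u00 : Xvert n n := (i0, i0).
pose umax : Xvert n n := (Ordinal (ltac:(lia) : n.-1 < n), i0).
exists psi; split.
- split.
  + move=> u v /phi_inj [e1 /(congr1 val)]; rewrite !vR ?sgR // => e2.
    case: u v e1 e2 => [u1 u2] [v1 v2] /= -> e2; congr pair; apply/val_inj.
    apply/eqP; rewrite -(nth_uniq 0 _ _ uniq_s).
    * exact/eqP.
    * exact: leq_trans (ltn_ord u2) ss.
    * exact: leq_trans (ltn_ord v2) ss.
  + move=> u v; rewrite /psi -phi_adj /Xadj /Xdir /= !vR ?sgR // !mono.
    by [].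
- by move=> v; exists (v.1, insubd j0 (sg v.2)).
- move=> i; exists (if d then x + i else x - i) => j; have := hcol (i, j).
  by case: (d) => /=; lia.
- have h1 := hcol umax; have h0 := hcol u00; have hm1 := hMc umax; have hm0 := hMc u00.
  move: h1 h0 => /= h1 h0.
  move: hcol h1 h0; case: (d) => hcol h1 h0.
  + exists x; split; first lia.
    * move=> v; have := hcol v; have := ltn_ord v.1; lia.
    * move=> k hk; exists (insubd i0 (k - x), i0); have := hcol (insubd i0 (k - x), i0).
      rewrite /= vn; lia.
  + exists (x - n.-1); split; first lia.
    * move=> v; have := hcol v; have := ltn_ord v.1; lia.
    * move=> k hk; exists (insubd i0 (x - k), i0); have := hcol (insubd i0 (x - k), i0).
      rewrite /= vn; lia.
Qed.
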